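(* Let $\mathcal C$ be a parsummable category, let $m,n\ge0$, $X_\bullet=(X_1,\dots,X_m)\in\mathcal C^{\times m}$, $Y_\bullet=(Y_1,\dots,Y_n)\in\mathcal C^{\times n}$, and let $\phi\colon\mathbf m\times\omega\to\omega$ and $\psi\colon\mathbf n\times\omega\to\omega$ be arbitrary injections. Then the map $\mathrm{Hom}_{\mathcal C}(\phi_*(X_\bullet),\psi_*(Y_\bullet))\to\Sigma_{\mathcal C}(X_\bullet,Y_\bullet)$, $f\mapsto[\psi,f,\phi]$, is bijective.
   Context: Let $\omega=\{1,2,\dots\}$, $\mathbf m=\{1,\dots,m\}$, and $\mathcal M$ the monoid of injections $\omega\to\omega$; $E\mathcal M$ is the category with objects $\mathcal M$ and a unique morphism between any two objects (a strict monoidal category). An $E\mathcal M$-category is a small category with a strict $E\mathcal M$-action; $u_*$ denotes the action of $u\in\mathcal M$ and $[v,u]\colon u_*\Rightarrow v_*$ the natural isomorphism from the morphism $u\to v$. An object $X$ is supported on finite $A\subset\omega$ if $u_*X=X$ whenever $u$ fixes $A$ pointwise; $\mathrm{supp}(X)$ is the intersection of the finite sets supporting $X$; tame means all objects are finitely supported. A parsummable category is a tame $E\mathcal M$-category $\mathcal C$ with an object $0$ of empty support and a functor $+$ defined on the full subcategory of $\mathcal C\times\mathcal C$ of disjointly supported pairs, strictly unital, associative, commutative and $E\mathcal M$-equivariant ($u_*(X+Y)=u_*X+u_*Y$ and $[u,1]_{X+Y}=[u,1]_X+[u,1]_Y$). For an injection $\phi\colon\mathbf m\times\omega\to\omega$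 put $\phi_*(X_\bullet)=\sum_{i=1}^m\phi(i,-)_*(X_i)$, and for another injection $\phi'$ put $[\phi',\phi]_{X_\bullet}=\sum_{i}[\phi'(i,-),\phi(i,-)]_{X_i}\colon\phi_*(X_\bullet)\to\phi'_*(X_\bullet)$. Define $\Sigma_{\mathcal C}(X_\bullet,Y_\bullet)$ as the set of triples $(\psi,f,\phi)$, with $\phi\colon\mathbf m\times\omega\to\omega$ and $\psi\colon\mathbf n\times\omega\to\omega$ injections and $f\colon\phi_*(X_\bullet)\to\psi_*(Y_\bullet)$ a morphism in $\mathcal C$, modulo the equivalence relation $(\psi,f,\phi)\sim(\psi',f',\phi')$ iff $f'=[\psi',\psi]\circ f\circ[\phi,\phi']$; $[\psi,f,\phi]$ denotes the class. *)

(* Defs.v *)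
From mathcomp Require Import all_boot.
Set Implicit Arguments. Unset Strict Implicit. Unset Printing Implicit Defensive.

(* Convention: omega = {1,2,...} is modelled by nat (a bijective relabelling);
   an injection omega -> omega is a function u : nat -> nat with [injective u].
   A small category is encoded single-sorted: a type of objects, a type of
   morphisms with domain/codomain, identities and a (total) composition whose
   axioms are imposed only on composable pairs. *)

Definition supported_on (Ob : Type) (act : (nat -> nat) -> Ob -> Ob)
  (X : Ob) (A : seq nat) : Prop :=
  forall u : nat -> nat, injective u -> (forall a, a \in A -> u a = a) -> act u X = X.

Definition in_supp (Ob : Type) (act : (nat -> nat) -> Ob -> Ob) (X : Ob) (a : nat) : Prop :=
  forall A : seq nat, supported_on act X A -> a \in A.

Definition disj_supp (Ob : Type) (act : (nat -> nat) -> Ob -> Ob) (X Y : Ob) : Prop :=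
  forall a, ~ (in_supp act X a /\ in_supp act Y a).

Record parsummable := Parsummable {
  Ob : Type;
  Mor : Type;
  dom : Mor -> Ob;
  cod : Mor -> Ob;
  idm : Ob -> Mor;
  comp : Mor -> Mor -> Mor;            (* comp g f = g o f *)
  dom_idm : forall X, dom (idm X) = X;
  cod_idm : forall X, cod (idm X) = X;
  dom_comp : forall g f, cod f = dom g -> dom (comp g f) = dom f;
  cod_comp : forall g f, cod f = dom g -> cod (comp g f) = cod g;
  comp_idr : forall f, comp f (idm (dom f)) = f;
  comp_idl : forall f, comp (idm (cod f)) f = f;
  compA : forall h g f, cod f = dom g -> cod g = dom h ->
    comp h (comp g f) = comp (comp h g) f;
  (* strict EM-action: u_* on objects and morphisms, [v,u]_X : u_*X -> v_*X *)
  act : (nat -> nat) -> Ob -> Ob;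
  actm : (nat -> nat) -> Mor -> Mor;
  br : (nat -> nat) -> (nat -> nat) -> Ob -> Mor;
  dom_actm : forall u f, injective u -> dom (actm u f) = act u (dom f);
  cod_actm : forall u f, injective u -> cod (actm u f) = act u (cod f);
  actm_idm : forall u X, injective u -> actm u (idm X) = idm (act u X);
  actm_comp : forall u g f, injective u -> cod f = dom g ->
    actm u (comp g f) = comp (actm u g) (actm u f);
  dom_br : forall v u X, injective u -> injective v -> dom (br v u X) = act u X;
  cod_br : forall v u X, injective u -> injective v -> cod (br v u X) = act v X;
  br_nat : forall v u f, injective u -> injective v ->
    comp (actm v f) (br v u (dom f)) = comp (br v u (cod f)) (actm u f);
  br_id : forall u X, injective u -> br u u X = idm (act u X);
  br_comp : forall w v u X, injective u -> injective v -> injective w ->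
    comp (br w v X) (br v u X) = br w u X;
  act_id : forall X, act id X = X;
  actm_id : forall f, actm id f = f;
  act_comp : forall u v X, injective u -> injective v ->
    act (u \o v) X = act u (act v X);
  actm_comp_fun : forall u v f, injective u -> injective v ->
    actm (u \o v) f = actm u (actm v f);
  br_comp_fun : forall u u' v v' X,
    injective u -> injective u' -> injective v -> injective v' ->
    br (u' \o v') (u \o v) X = comp (br u' u (act v' X)) (actm u (br v' v X));
  tame : forall X, exists A : seq nat, supported_on act X A;
  zero : Ob;
  supp_zero : forall a, ~ in_supp act zero a;
  plus : Ob -> Ob -> Ob;
  plusm : Mor -> Mor -> Mor;
  dom_plusm : forall f g, disj_supp act (dom f) (dom g) -> disj_supp act (cod f) (cod g) ->
    dom (plusm f g) = plus (dom f) (dom g);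
  cod_plusm : forall f g, disj_supp act (dom f) (dom g) -> disj_supp act (cod f) (cod g) ->
    cod (plusm f g) = plus (cod f) (cod g);
  plusm_idm : forall X Y, disj_supp act X Y -> plusm (idm X) (idm Y) = idm (plus X Y);
  plusm_comp : forall f g f' g', cod f = dom f' -> cod g = dom g' ->
    disj_supp act (dom f) (dom g) -> disj_supp act (cod f) (cod g) ->
    disj_supp act (cod f') (cod g') ->
    plusm (comp f' f) (comp g' g) = comp (plusm f' g') (plusm f g);
  plus0r : forall X, plus X zero = X;
  plus0l : forall X, plus zero X = X;
  plusm0r : forall f, plusm f (idm zero) = f;
  plusm0l : forall f, plusm (idm zero) f = f;
  plusA : forall X Y Z, disj_supp act X Y -> disj_supp act X Z -> disj_supp act Y Z ->
    plus (plus X Y) Z = plus X (plus Y Z);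
  plusmA : forall f g h,
    disj_supp act (dom f) (dom g) -> disj_supp act (dom f) (dom h) -> disj_supp act (dom g) (dom h) ->
    disj_supp act (cod f) (cod g) -> disj_supp act (cod f) (cod h) -> disj_supp act (cod g) (cod h) ->
    plusm (plusm f g) h = plusm f (plusm g h);
  plusC : forall X Y, disj_supp act X Y -> plus X Y = plus Y X;
  plusmC : forall f g, disj_supp act (dom f) (dom g) -> disj_supp act (cod f) (cod g) ->
    plusm f g = plusm g f;
  act_plus : forall u X Y, injective u -> disj_supp act X Y ->
    act u (plus X Y) = plus (act u X) (act u Y);
  actm_plusm : forall u f g, injective u ->
    disj_supp act (dom f) (dom g) -> disj_supp act (cod f) (cod g) ->
    actm u (plusm f g) = plusm (actm u f) (actm u g);
  br_plus : forall u X Y, injective u -> disj_supp act X Y ->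
    br u id (plus X Y) = plusm (br u id X) (br u id Y)
}.

Section Sigma.
Variable C : parsummable.

(* injections phi : m x omega -> omega, curried *)
Definition inj2 (m : nat) (phi : 'I_m -> nat -> nat) : Prop :=
  forall i i' j j', phi i j = phi i' j' -> i = i' /\ j = j'.

Definition pstar (m : nat) (phi : 'I_m -> nat -> nat) (X : 'I_m -> Ob C) : Ob C :=
  \big[@plus C / zero C]_(i < m) @act C (phi i) (X i).

Definition pbr (m : nat) (phi' phi : 'I_m -> nat -> nat) (X : 'I_m -> Ob C) : Mor C :=
  \big[@plusm C / idm (zero C)]_(i < m) @br C (phi' i) (phi i) (X i).

Definition Hom (A B : Ob C) := { f : Mor C | dom f = A /\ cod f = B }.

Record triple (m n : nat) (X : 'I_m -> Ob C) (Y : 'I_n -> Ob C) := Triple {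
  tphi : 'I_m -> nat -> nat;
  tphi_inj : inj2 tphi;
  tpsi : 'I_n -> nat -> nat;
  tpsi_inj : inj2 tpsi;
  tf : Hom (pstar tphi X) (pstar tpsi Y)
}.

Definition tsim (m n : nat) (X : 'I_m -> Ob C) (Y : 'I_n -> Ob C)
  (t t' : triple X Y) : Prop :=
  sval (tf t') = @comp C (pbr (tpsi t') (tpsi t) Y)
                        (@comp C (sval (tf t)) (pbr (tphi t) (tphi t') X)).

Definition tclass (m n : nat) (X : 'I_m -> Ob C) (Y : 'I_n -> Ob C)
  (t : triple X Y) : triple X Y -> Prop := fun s => tsim s t.

Definition Sigma (m n : nat) (X : 'I_m -> Ob C) (Y : 'I_n -> Ob C)
  (c : triple X Y -> Prop) : Prop := exists t : triple X Y, c = tclass t.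

Definition to_Sigma (m n : nat) (X : 'I_m -> Ob C) (Y : 'I_n -> Ob C)
  (phi : 'I_m -> nat -> nat) (psi : 'I_n -> nat -> nat)
  (hphi : inj2 phi) (hpsi : inj2 psi)
  (f : Hom (pstar phi X) (pstar psi Y)) : triple X Y -> Prop :=
  tclass (Triple hphi hpsi f).

End Sigma.

(* Main.v *)
Require Import Defs.
From mathcomp Require Import all_boot.
From mathcomp Require Import zify.
From Stdlib Require Import Classical FunctionalExtensionality ProofIrrelevance PropExtensionality.

Set Implicit Arguments. Unset Strict Implicit.

Lemma exists_big (f : nat -> nat) (hf : injective f) L B :
  exists k, (L <= k) && (B < f k).
Proof.
apply: NNPP => H.
have Hs : {subset map f (iota L B.+2) <= iota 0 B.+1}.
  move=> y /mapP[k]; rewrite mem_iota => /andP[h1 _] ->.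
  rewrite mem_iota /= add0n ltnS leqNgt; apply/negP => h2.
  by apply: H; exists k; rewrite h1 h2.
have := uniq_leq_size _ Hs.
by rewrite map_inj_uniq // iota_uniq size_map !size_iota ltnn => /(_ isT).
Qed.

Section Comb.
Variables (u w : nat -> nat) (hu : injective u) (hw : injective w) (N : nat).
Hypothesis agree : forall k, k < N -> u k = w k.

Definition pk (f : nat -> nat) (hf : injective f) L B := ex_minn (exists_big hf L B).
Lemma pk_spec f (hf : injective f) L B : L <= pk hf L B /\ B < f (pk hf L B).
Proof. rewrite /pk; case: ex_minnP => k /andP[h1 h2] _; done. Qed.

Fixpoint ab (i : nat) : nat * nat := match i with
 | 0 => let a := pk hu N 0 in (a, pk hw N (u a))
 | i.+1 => let a := pk hu (ab i).1.+1 (w (ab i).2) in (a, pk hw (ab i).2.+1 (u a))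
 end.

Lemma ab_ge i : N <= (ab i).1 /\ N <= (ab i).2.
Proof.
elim: i => [|i [h1 h2]] /=.
  by case: (pk_spec hu N 0) => ->; case: (pk_spec hw N (u (pk hu N 0))) => ->.
case: (pk_spec hu (ab i).1.+1 (w (ab i).2)) => h3 _.
case: (pk_spec hw (ab i).2.+1 (u (pk hu (ab i).1.+1 (w (ab i).2)))) => h4 _.
split; lia.
Qed.

Definition h k := if odd k then w (ab k./2).2 else u (ab k./2).1.

Lemma h_even j : h j.*2 = u (ab j).1.
Proof. by rewrite /h odd_double doubleK. Qed.
Lemma h_odd j : h j.*2.+1 = w (ab j).2.
Proof. by rewrite /h /= odd_double /= uphalf_double. Qed.

Lemma h_S k : h k < h k.+1.
Proof.
rewrite -(odd_double_half k); case: (odd k); rewrite /= ?add0n.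
  rewrite -doubleS h_even h_odd /=.
  by case: (pk_spec hu (ab k./2).1.+1 (w (ab k./2).2)).
rewrite h_even h_odd; case: (k./2) => [|j] /=.
  by case: (pk_spec hw N (u (pk hu N 0))).
by case: (pk_spec hw (ab j).2.+1 (u (pk hu (ab j).1.+1 (w (ab j).2)))).
Qed.

Lemma h_inj : injective h.
Proof.
move=> k k' e; have hm := homo_ltn ltn_trans h_S.
case: (ltngtP k k') => // [/hm|/hm]; rewrite e ltnn //.
Qed.

Definition t k := if k < N then u k else h (k - N).
Definition a' k := if k < N then k else (ab (k - N)).1.
Definition b' k := if k < N then k else (ab (k - N)).2.
Definition x1 k := if k < N then k else N + (k - N).*2.
Definition y1 k := if k < N then k else N + (k - N).*2.+1.

Lemma tx1 : u \o a' =1 t \o x1.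
Proof.
move=> k; rewrite /= /t /a' /x1; case: ifP => hk; first by rewrite hk.
have -> : (N + (k - N).*2 < N) = false by lia.
by rewrite addKn h_even.
Qed.

Lemma ty1 : w \o b' =1 t \o y1.
Proof.
move=> k; rewrite /= /t /b' /y1; case: ifP => hk; first by rewrite hk agree.
have -> : (N + (k - N).*2.+1 < N) = false by lia.
by rewrite addKn h_odd.
Qed.

Lemma x1_inj : injective x1.
Proof. move=> k k'; rewrite /x1; case: ifP; case: ifP; lia. Qed.
Lemma y1_inj : injective y1.
Proof. move=> k k'; rewrite /y1; case: ifP; case: ifP; lia. Qed.

Lemma ab1_inj i j : (ab i).1 = (ab j).1 -> i = j.
Proof. by move=> e; apply/double_inj/h_inj; rewrite !h_even e. Qed.
Lemma ab2_inj i j : (ab i).2 = (ab j).2 -> i = j.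
Proof. move=> e; have : h i.*2.+1 = h j.*2.+1 by rewrite !h_odd e.
move/h_inj; lia. Qed.

Lemma a'_inj : injective a'.
Proof.
move=> k k'; rewrite /a'; case: ifP => h1; case: ifP => h2.
- done.
- move: (ab_ge (k' - N)) => [? _]; lia.
- move: (ab_ge (k - N)) => [? _]; lia.
- move/ab1_inj; lia.
Qed.
Lemma b'_inj : injective b'.
Proof.
move=> k k'; rewrite /b'; case: ifP => h1; case: ifP => h2.
- done.
- move: (ab_ge (k' - N)) => [_ ?]; lia.
- move: (ab_ge (k - N)) => [_ ?]; lia.
- move/ab2_inj; lia.
Qed.

Lemma t_inj : injective t.
Proof.
have uh : forall k i, k < N -> u k <> h i.
  move=> k i hk; rewrite -(odd_double_half i); case: (odd i); rewrite /= ?add0n.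
    rewrite h_odd agree // => /hw; move: (ab_ge i./2) => [_ ?]; lia.
  rewrite h_even => /hu; move: (ab_ge i./2) => [? _]; lia.
move=> k k'; rewrite /t; case: ifP => h1; case: ifP => h2.
- by move/hu.
- by move/uh; move/(_ h1).
- by move=> e; symmetry in e; move: e; move/uh; move/(_ h2).
- move/h_inj; lia.
Qed.

End Comb.

Unset Implicit Arguments.

Section Cat.
Variable C : parsummable.
Local Notation act := (@act C).
Local Notation comp := (@Defs.comp C).

Lemma K (Z : Ob C) N u w : supported_on act Z (iota 0 N) -> injective u -> injective w ->
  (forall k, k < N -> u k = w k) -> act u Z = act w Z.
Proof.
move=> hZ hu hw ag.
have fix_iota : forall f, (forall k, k < N -> f k = k) -> forall a, a \in iota 0 N -> f a = a.
  by move=> f hf a; rewrite mem_iota add0n => /andP[_ /hf].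
have ea : act (a' hu hw N) Z = Z.
  apply: hZ; first exact: a'_inj. by apply: fix_iota => k hk; rewrite /a' hk.
have eb : act (b' hu hw N) Z = Z.
  apply: hZ; first exact: b'_inj. by apply: fix_iota => k hk; rewrite /b' hk.
have ex : act (x1 N) Z = Z.
  apply: hZ; first exact: x1_inj. by apply: fix_iota => k hk; rewrite /x1 hk.
have ey : act (y1 N) Z = Z.
  apply: hZ; first exact: y1_inj. by apply: fix_iota => k hk; rewrite /y1 hk.
have tinj : injective (t hu hw N) := t_inj ag.
have e1 : act u Z = act (t hu hw N) Z.
  rewrite -{1}ea -act_comp //; last exact: a'_inj.
  rewrite (functional_extensionality _ _ (tx1 hu hw N)) act_comp //.
    by rewrite ex.
  exact: x1_inj.
have e2 : act w Z = act (t hu hw N) Z.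
  rewrite -{1}eb -act_comp //; last exact: b'_inj.
  rewrite (functional_extensionality _ _ (ty1 hu hw ag)) act_comp //.
    by rewrite ey.
  exact: y1_inj.
by rewrite e1 e2.
Qed.

Lemma supp_iota (Z : Ob C) : exists N, supported_on act Z (iota 0 N).
Proof.
case: (tame Z) => A hA; exists (\max_(a <- A) a).+1.
move=> v hv hf; apply: hA => // a aA; apply: hf.
rewrite mem_iota add0n ltnS /=; exact: (leq_bigmax_seq (F := id) a aA isT).
Qed.

Lemma supp_act (Z : Ob C) N u : supported_on act Z (iota 0 N) -> injective u ->
  supported_on act (act u Z) (map u (iota 0 N)).
Proof.
move=> hZ hu v hv hf; rewrite -act_comp //; apply: (K _ _ _ _ hZ) => //.
  exact: inj_comp.
move=> k hk /=; apply: hf; apply: map_f; rewrite mem_iota; lia.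
Qed.

Definition ssub (Z : Ob C) (P : nat -> Prop) := forall a, in_supp act Z a -> P a.

Lemma ssub_act (Z : Ob C) u : injective u -> ssub (act u Z) (fun a => exists k, a = u k).
Proof.
move=> hu a ha; case: (supp_iota Z) => N hN.
by case/mapP: (ha _ (supp_act _ _ _ hN hu)) => k _ ->; exists k.
Qed.

Lemma not_in_supp (Z : Ob C) a : ~ in_supp act Z a -> exists B, supported_on act Z B /\ a \notin B.
Proof.
move=> H; apply: NNPP => H2; apply: H => B hB; apply: NNPP => H3.
by apply: H2; exists B; split => //; apply/negP.
Qed.

Lemma supported_cat (Z : Ob C) B B' : supported_on act Z B -> supported_on act Z (B ++ B').
Proof. by move=> hB v hv hf; apply: hB => // a aB; apply: hf; rewrite mem_cat aB. Qed.
Lemma supported_cat' (Z : Ob C) B B' : supported_on act Z B' -> supported_on act Z (B ++ B').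
Proof. by move=> hB v hv hf; apply: hB => // a aB; apply: hf; rewrite mem_cat aB orbT. Qed.

Lemma ssub_plus (Z Z' : Ob C) P Q : disj_supp act Z Z' -> ssub Z P -> ssub Z' Q ->
  ssub (plus Z Z') (fun a => P a \/ Q a).
Proof.
move=> hd hP hQ a ha; apply: NNPP => nPQ.
have [B [hB aB]] : exists B, supported_on act Z B /\ a \notin B.
  by apply: not_in_supp => /hP; tauto.
have [B' [hB' aB']] : exists B, supported_on act Z' B /\ a \notin B.
  by apply: not_in_supp => /hQ; tauto.
have : a \in B ++ B'.
  apply: ha => v hv hf; rewrite act_plus //.
  by rewrite (supported_cat _ _ _ hB _ hv hf) (supported_cat' _ _ _ hB' _ hv hf).
by rewrite mem_cat (negbTE aB) (negbTE aB').
Qed.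

Lemma ssub_zero P : ssub (zero C) P.
Proof. by move=> a /supp_zero. Qed.

Lemma disj_of (Z Z' : Ob C) P Q : ssub Z P -> ssub Z' Q -> (forall a, P a -> Q a -> False) ->
  disj_supp act Z Z'.
Proof. by move=> hP hQ hd a [/hP ? /hQ ?]; apply: (hd a). Qed.

Section Big.
Variables (m : nat) (X : 'I_m -> Ob C).

Definition Pr (u : 'I_m -> nat -> nat) (r : seq 'I_m) :=
  \big[@plus C / zero C]_(i <- r) act (u i) (X i).
Definition Br (v u : 'I_m -> nat -> nat) (r : seq 'I_m) :=
  \big[@plusm C / idm (zero C)]_(i <- r) br (v i) (u i) (X i).

Lemma inj2_inj (u : 'I_m -> nat -> nat) : inj2 u -> forall i, injective (u i).
Proof. by move=> hu i j j' /hu []. Qed.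

Lemma Pr_ssub u r : inj2 u -> uniq r ->
  ssub (Pr u r) (fun a => exists i, i \in r /\ exists k, a = u i k).
Proof.
move=> hu; elim: r => [|i r IH] /=.
  by move=> _; rewrite /Pr big_nil; apply: ssub_zero.
move=> /andP[ir ur]; rewrite /Pr big_cons.
have hd : disj_supp act (act (u i) (X i)) (Pr u r).
  apply: (disj_of _ _ _ _ (ssub_act (X i) (u i) (inj2_inj u hu i)) (IH ur)).
  move=> a [k ->] [j [jr [k' /hu [e _]]]]; by move: ir; rewrite e jr.
move=> a /(ssub_plus _ _ _ _ hd (ssub_act (X i) (u i) (inj2_inj u hu i)) (IH ur)) [[k ->]|[j [jr hj]]].
  by exists i; rewrite mem_head; split => //; exists k.
by exists j; rewrite in_cons jr orbT.
Qed.

Lemma Pr_disj u r i : inj2 u -> uniq r -> i \notin r ->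
  disj_supp act (act (u i) (X i)) (Pr u r).
Proof.
move=> hu ur ir.
apply: (disj_of _ _ _ _ (ssub_act (X i) (u i) (inj2_inj u hu i)) (Pr_ssub u r hu ur)).
move=> a [k ->] [j [jr [k' /hu [e _]]]]; by move: ir; rewrite e jr.
Qed.

Lemma Br_domcod v u r : inj2 u -> inj2 v -> uniq r ->
  dom (Br v u r) = Pr u r /\ cod (Br v u r) = Pr v r.
Proof.
move=> hu hv; elim: r => [|i r IH] /=.
  by move=> _; rewrite /Br /Pr !big_nil dom_idm cod_idm.
move=> /andP[ir ur]; have [d c] := IH ur.
rewrite /Br /Pr !big_cons -/(Br v u r) -/(Pr u r) -/(Pr v r).
have hdi := dom_br (X i) (inj2_inj u hu i) (inj2_inj v hv i).
have hci := cod_br (X i) (inj2_inj u hu i) (inj2_inj v hv i).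
have h1 : disj_supp act (dom (br (v i) (u i) (X i))) (dom (Br v u r)).
  by rewrite hdi d; apply: Pr_disj.
have h2 : disj_supp act (cod (br (v i) (u i) (X i))) (cod (Br v u r)).
  by rewrite hci c; apply: Pr_disj.
by rewrite dom_plusm // cod_plusm // hdi hci d c.
Qed.

Lemma Br_id u r : inj2 u -> uniq r -> Br u u r = idm (Pr u r).
Proof.
move=> hu; elim: r => [|i r IH] /=.
  by move=> _; rewrite /Br /Pr !big_nil.
move=> /andP[ir ur].
rewrite /Br /Pr !big_cons -/(Br u u r) -/(Pr u r) IH // br_id; last exact: inj2_inj.
by rewrite plusm_idm //; apply: Pr_disj.
Qed.

Lemma Br_comp (w v u : 'I_m -> nat -> nat) r : inj2 u -> inj2 v -> inj2 w -> uniq r ->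
  comp (Br w v r) (Br v u r) = Br w u r.
Proof.
move=> hu hv hw; elim: r => [|i r IH] /=.
  by move=> _; rewrite /Br !big_nil -{1}(cod_idm (zero C)) comp_idl.
move=> /andP[ir ur].
have [d1 c1] := Br_domcod v u r hu hv ur.
have [d2 c2] := Br_domcod w v r hv hw ur.
have iu := inj2_inj u hu i; have iv := inj2_inj v hv i; have iw := inj2_inj w hw i.
rewrite /Br !big_cons -/(Br w v r) -/(Br v u r) -/(Br w u r).
rewrite -plusm_comp.
- by rewrite IH // br_comp.
- by rewrite cod_br // dom_br.
- by rewrite c1 d2.
- by rewrite dom_br // d1; apply: Pr_disj.
- by rewrite cod_br // c1; apply: Pr_disj.
- by rewrite cod_br // c2; apply: Pr_disj.
Qed.

End Big.
End Cat.

Theorem lemma2p2 (C : parsummable) (m n : nat)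
  (X : 'I_m -> Ob C) (Y : 'I_n -> Ob C)
  (phi : 'I_m -> nat -> nat) (psi : 'I_n -> nat -> nat)
  (hphi : inj2 phi) (hpsi : inj2 psi) :
  (forall f f' : @Hom C (pstar phi X) (pstar psi Y),
      to_Sigma hphi hpsi f = to_Sigma hphi hpsi f' -> f = f') /\
  (forall c : triple X Y -> Prop, Sigma c ->
      exists f : @Hom C (pstar phi X) (pstar psi Y), c = to_Sigma hphi hpsi f).
Proof.
have pbrE : forall k (Z : 'I_k -> Ob C) v u, pbr v u Z = Br C k Z v u (index_enum 'I_k) by [].
have pstarE : forall k (Z : 'I_k -> Ob C) u, pstar u Z = Pr C k Z u (index_enum 'I_k) by [].
have pid : forall k (Z : 'I_k -> Ob C) u, inj2 u -> pbr u u Z = idm (pstar u Z).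
  by move=> k Z u hu; rewrite pbrE pstarE Br_id // index_enum_uniq.
have pdc : forall k (Z : 'I_k -> Ob C) v u, inj2 u -> inj2 v ->
    dom (pbr v u Z) = pstar u Z /\ cod (pbr v u Z) = pstar v Z.
  by move=> k Z v u hu hv; rewrite pbrE !pstarE; apply: Br_domcod => //; apply: index_enum_uniq.
have pcomp : forall k (Z : 'I_k -> Ob C) w v u, inj2 u -> inj2 v -> inj2 w ->
    Defs.comp (pbr w v Z) (pbr v u Z) = pbr w u Z.
  by move=> k Z w v u hu hv hw; rewrite !pbrE Br_comp // index_enum_uniq.
split.
- move=> f f' e.
  have H := f_equal (fun c => c (Triple hphi hpsi f)) e.
  rewrite /= /to_Sigma /tclass /tsim /= in H.
  have triv : forall g : @Hom C (pstar phi X) (pstar psi Y),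
      Defs.comp (pbr psi psi Y) (Defs.comp (sval g) (pbr phi phi X)) = sval g.
    move=> [g [dg cg]] /=; rewrite !pid // -dg -cg comp_idr comp_idl //.
  rewrite !triv in H.
  have : sval f' = sval f by rewrite -H.
  case: f {e H} => f hf; case: f' => f' hf' /= ef; subst f'.
  by rewrite (proof_irrelevance _ hf hf').
- pose Tr b' b a a' h := Defs.comp (pbr b' b Y) (Defs.comp h (pbr a a' X)).
  have Tr_dc : forall b' b a a' h, inj2 a -> inj2 a' -> inj2 b -> inj2 b' ->
      dom h = pstar a X -> cod h = pstar b Y ->
      dom (Tr b' b a a' h) = pstar a' X /\ cod (Tr b' b a a' h) = pstar b' Y.
    move=> b' b a a' h ha ha' hb hb' dh ch.
    have [d1 c1] := pdc m X a a' ha' ha.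
    have [d2 c2] := pdc n Y b' b hb hb'.
    rewrite /Tr; split.
      rewrite dom_comp; last by rewrite cod_comp ?c1 // ch d2.
      by rewrite dom_comp ?d1 // c1 dh.
    by rewrite cod_comp // cod_comp ?c1 // ch d2.
  have Tr_id : forall b a h, inj2 a -> inj2 b -> dom h = pstar a X -> cod h = pstar b Y ->
      Tr b b a a h = h.
    move=> b a h ha hb dh ch; rewrite /Tr !pid // -dh -ch comp_idr comp_idl //.
  have TrTr : forall b'' b' b a a' a'' h, inj2 a -> inj2 a' -> inj2 a'' -> inj2 b -> inj2 b' -> inj2 b'' ->
      dom h = pstar a X -> cod h = pstar b Y ->
      Tr b'' b' a' a'' (Tr b' b a a' h) = Tr b'' b a a'' h.
    move=> b'' b' b a a' a'' h ha ha' ha'' hb hb' hb'' dh ch.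
    have [d1 c1] := pdc m X a a' ha' ha.
    have [d2 c2] := pdc n Y b' b hb hb'.
    have [d3 c3] := pdc m X a' a'' ha'' ha'.
    have [d4 c4] := pdc n Y b'' b' hb' hb''.
    rewrite /Tr.
    have s1 : cod (pbr a' a'' X) = dom (Defs.comp h (pbr a a' X)) by rewrite c3 dom_comp ?d1 // c1 dh.
    have s2 : cod (Defs.comp h (pbr a a' X)) = dom (pbr b' b Y) by rewrite cod_comp ?ch ?d2 // c1 dh.
    rewrite -(Defs.compA s1 s2).
    have s3 : cod (pbr a' a'' X) = dom (pbr a a' X) by rewrite c3 d1.
    have s4 : cod (pbr a a' X) = dom h by rewrite c1 dh.
    rewrite -(Defs.compA s3 s4).
    have s5 : cod (Defs.comp h (Defs.comp (pbr a a' X) (pbr a' a'' X))) = dom (pbr b' b Y).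
      by rewrite cod_comp ?ch ?d2 // cod_comp ?c1 ?dh // d3 c3.
    have s6 : cod (pbr b' b Y) = dom (pbr b'' b' Y) by rewrite c2 d4.
    rewrite (Defs.compA s5 s6).
    by rewrite !pcomp.
  move=> c [[phi' hphi' psi' hpsi' [f' [df' cf']]] ->].
  have [dg cg] := Tr_dc psi psi' phi' phi f' hphi' hphi hpsi' hpsi df' cf'.
  exists (exist _ (Tr psi psi' phi' phi f') (conj dg cg)).
  apply: functional_extensionality => s; apply: propositional_extensionality.
  rewrite /to_Sigma /tclass /tsim /=.
  case: s => phis hphis psis hpsis [fs [dfs cfs]] /=.
  rewrite -/(Tr psi' psis phis phi' fs) -/(Tr psi psis phis phi fs).
  split => e.
    by rewrite e TrTr.
  rewrite -(Tr_id psi' phi' f') // -(TrTr psi' psi psi' phi' phi phi' f') //.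
  by rewrite e TrTr.
Qed.
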